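(* Let $M$ be a set and let $\mathcal{U}=\{U_1,U_2,\dots\}$ and $\mathcal{B}=\{B_1,B_2,\dots\}$ be two partitions of $M$, each enumerated without repetition by (an initial segment of) the positive integers. Assume only Condition 1 (stated in the context). Let $k\ge 0$ and let $\{x_1,\dots,x_k\}$ be an $S_k$-system with $U_i\cap B_i=\{x_i\}$ for $i\in\{1,\dots,k\}$. Then for every index $t>k$ for which $B_t$ exists, there is an index $s>k$ and an $S_{k+1}$-system $\{y_1,\dots,y_{k+1}\}$ that represents both $U_1,\dots,U_k,U_s$ and $B_1,\dots,B_k,B_t$; that is, each of these $2(k+1)$ sets contains exactly one of the elements $y_1,\dots,y_{k+1}$ (though not necessarily in the same order as the indices).
   Context: A partition of a set $V$ is a collection of nonempty, pairwise disjoint subsets of $V$ whose union is $V$. Condition 1 (two-sided): for no $k\in\mathbb{N}$ do there exist $k-1$ elements of $\mathcal{U}$ whose union contains $k$ distinct elements of $\mathcal{B}$. Likewise, for no $k\in\mathbb{N}$ do there exist $k-1$ elements of $\mathcal{B}$ whose union contains $k$ distinct elements of $\mathcal{U}$. An $S_k$-system is a set $\{x_1,\dots,x_k\}$ of $k$ elements of $M$ such that no element of $\mathcal{U}$ and no element of $\mathcal{B}$ contains two of them. *)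

(* Defs.v *)
From Stdlib Require Import Arith List.
Import ListNotations.
Set Implicit Arguments.

(* An enumerated partition of M: block i is [P i : M -> Prop], the set of
   valid indices is [I], an initial segment of the positive integers
   (finite or all of them).  Blocks are nonempty, pairwise disjoint (hence
   the enumeration is without repetition) and cover M. *)
Definition is_enum_partition (M : Type) (P : nat -> M -> Prop) (I : nat -> Prop) : Prop :=
  (forall i, I i -> 1 <= i) /\
  (forall i j, 1 <= i -> i <= j -> I j -> I i) /\
  (forall i, I i -> exists x, P i x) /\
  (forall i j x, I i -> I j -> P i x -> P j x -> i = j) /\
  (forall x, exists i, I i /\ P i x).

(* One side of Condition 1: there are no k-1 (here: n) distinct blocks of the
   first partition whose union contains k (here: n+1) distinct blocks of the
   second.  (k ranges over N = {1,2,...}, i.e. k = n+1 with n >= 0.) *)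
Definition no_overcover (M : Type) (U : nat -> M -> Prop) (IU : nat -> Prop)
    (B : nat -> M -> Prop) (IB : nat -> Prop) : Prop :=
  forall n : nat, ~ exists (SU SB : list nat),
    NoDup SU /\ length SU = n /\ (forall i, In i SU -> IU i) /\
    NoDup SB /\ length SB = S n /\ (forall j, In j SB -> IB j) /\
    (forall j, In j SB -> forall x, B j x -> exists i, In i SU /\ U i x).

Definition Condition1 (M : Type) (U : nat -> M -> Prop) (IU : nat -> Prop)
    (B : nat -> M -> Prop) (IB : nat -> Prop) : Prop :=
  no_overcover U IU B IB /\ no_overcover B IB U IU.

Definition S_system (M : Type) (U : nat -> M -> Prop) (IU : nat -> Prop)
    (B : nat -> M -> Prop) (IB : nat -> Prop) (k : nat) (y : nat -> M) : Prop :=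
  (forall a b, 1 <= a <= k -> 1 <= b <= k -> y a = y b -> a = b) /\
  (forall i, IU i -> forall a b, 1 <= a <= k -> 1 <= b <= k ->
       U i (y a) -> U i (y b) -> a = b) /\
  (forall i, IB i -> forall a b, 1 <= a <= k -> 1 <= b <= k ->
       B i (y a) -> B i (y b) -> a = b).

Definition contains_exactly_one (M : Type) (k : nat) (y : nat -> M) (X : M -> Prop) : Prop :=
  exists a, 1 <= a <= k /\ X (y a) /\ (forall b, 1 <= b <= k -> X (y b) -> b = a).

(* Main.v *)
Require Import Defs.
From Stdlib Require Import Arith List Lia Classical.
Import ListNotations.

Unset Implicit Arguments.
Section Main.
Variables (M : Type) (U : nat -> M -> Prop) (IU : nat -> Prop)
    (B : nat -> M -> Prop) (IB : nat -> Prop).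
Hypothesis hU : is_enum_partition U IU.
Hypothesis hB : is_enum_partition B IB.
Hypothesis hC : Condition1 U IU B IB.
Variables (k : nat) (x : nat -> M).
Hypothesis hidx : forall i, 1 <= i <= k -> IU i /\ IB i.
Hypothesis hx : S_system U IU B IB k x.
Hypothesis hdiag : forall i, 1 <= i <= k -> forall z, (U i z /\ B i z) <-> z = x i.
Variable t : nat.
Hypothesis ht : k < t.
Hypothesis hIBt : IB t.

Lemma Udisj : forall i j z, IU i -> IU j -> U i z -> U j z -> i = j.
Proof. destruct hU as (_&_&_&H&_). exact H. Qed.
Lemma Bdisj : forall i j z, IB i -> IB j -> B i z -> B j z -> i = j.
Proof. destruct hB as (_&_&_&H&_). exact H. Qed.
Lemma xUB : forall a, 1 <= a <= k -> U a (x a) /\ B a (x a).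
Proof. intros a Ha. apply (proj2 (hdiag a Ha (x a))). reflexivity. Qed.
Lemma IUa : forall a, 1 <= a <= k -> IU a.
Proof. intros a Ha; apply (hidx a Ha). Qed.
Lemma IBa : forall a, 1 <= a <= k -> IB a.
Proof. intros a Ha; apply (hidx a Ha). Qed.

Definition Dom i := 1 <= i <= k \/ i = t.
Lemma Dom_IB : forall i, Dom i -> IB i.
Proof. intros i [H|H]; [apply IBa; auto | subst; auto]. Qed.
Arguments Dom_IB {i}.

Definition GoodY (j : nat) (p : list nat) : Prop :=
  exists y : nat -> M,
    (forall a, 1 <= a <= k -> U a (y a)) /\
    (forall a b, 1 <= a <= k -> 1 <= b <= k -> forall i, IB i -> B i (y a) -> B i (y b) -> a = b) /\
    (forall a, 1 <= a <= k -> ~ B j (y a)) /\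
    (forall i, Dom i -> i <> j -> exists a, 1 <= a <= k /\ B i (y a)) /\
    (forall a, 1 <= a <= k -> ~ In a p -> y a = x a).

Inductive Path : list nat -> nat -> Prop :=
  | P0 : Path [] t
  | PS : forall p j l e, Path p j -> 1 <= l <= k -> B j e -> U l e -> Path (l :: p) l.

Lemma path_in : forall p j, Path p j -> forall a, In a p -> 1 <= a <= k.
Proof.
  induction 1; simpl; intros a Ha; [contradiction|].
  destruct Ha; [subst; auto | auto].
Qed.
Arguments path_in {p j}.

Lemma path_head : forall p j, Path p j -> j = t \/ In j p.
Proof. induction 1; simpl; auto. Qed.
Arguments path_head {p j}.

Lemma path_dom : forall p j, Path p j -> Dom j.
Proof.
  intros p j H. destruct (path_head H) as [Hj|Hj]; [right; auto | left; eapply path_in; eauto].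
Qed.
Arguments path_dom {p j}.

Lemma path_good : forall p j, Path p j -> NoDup p -> GoodY j p.
Proof.
  induction 1 as [| p j l e Hp IH Hl Hje Hle]; intros Hnd.
  - exists x. split; [|split; [|split;[|split]]].
    + intros a Ha; apply xUB; auto.
    + intros a b Ha Hb i Hi H1 H2. destruct hx as (_&_&H3). exact (H3 i Hi a b Ha Hb H1 H2).
    + intros a Ha H. pose proof (xUB a Ha) as [_ Hb].
      assert (a = t) by (apply Bdisj with (x a); auto using IBa). lia.
    + intros i [Hi|Hi] Hne; [exists i; split; [lia| apply xUB; lia] | congruence].
    + auto.
  - inversion Hnd as [|? ? Hnotin Hnd']; subst.
    destruct (IH Hnd') as (y & Y1 & Y2 & Y3 & Y4 & Y5).
    assert (Hjl : j <> l).
    { destruct (path_head Hp) as [H|H]; [lia | intro; subst; contradiction]. }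
    assert (Hyl : y l = x l) by (apply Y5; auto).
    pose proof (path_dom Hp) as HDj. pose proof (Dom_IB HDj) as HIBj.
    pose proof (xUB l Hl) as [HUl HBl].
    exists (fun a => if Nat.eq_dec a l then e else y a).
    split; [|split; [|split;[|split]]].
    + intros a Ha; destruct (Nat.eq_dec a l); subst; auto.
    + intros a b Ha Hb i Hi H1 H2.
      destruct (Nat.eq_dec a l), (Nat.eq_dec b l); subst; auto.
      * assert (i = j) by (apply Bdisj with e; auto). subst. exfalso; apply (Y3 b Hb H2).
      * assert (i = j) by (apply Bdisj with e; auto). subst. exfalso; apply (Y3 a Ha H1).
      * eapply Y2; eauto.
    + intros a Ha H. destruct (Nat.eq_dec a l).
      * apply Hjl. apply Bdisj with e; auto using IBa.
      * apply n. apply Y2 with l; auto using IBa. rewrite Hyl; auto.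
    + intros i Hi Hne. destruct (Nat.eq_dec i j).
      * subst. exists l. split; [lia|]. destruct (Nat.eq_dec l l); [auto|congruence].
      * destruct (Y4 i Hi n) as (a&Ha&Hba). exists a. split; auto.
        destruct (Nat.eq_dec a l); auto. subst.
        exfalso. apply Hne. apply Bdisj with (x l); auto using IBa, Dom_IB. rewrite <- Hyl; auto.
    + intros a Ha Hn. destruct (Nat.eq_dec a l).
      * subst. exfalso; apply Hn; simpl; auto.
      * apply Y5; auto. intro; apply Hn; simpl; auto.
Qed.
Arguments path_good {p j}.

Lemma path_suffix : forall q j, Path q j -> forall l, In l q ->
  exists r pre, Path (l :: r) l /\ q = pre ++ l :: r.
Proof.
  induction 1 as [| p j l' e Hp IH Hl Hje Hle]; simpl; intros l Hin; [contradiction|].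
  destruct Hin as [Hin|Hin].
  - subst. exists p, []. split; auto. econstructor; eauto.
  - destruct (IH l Hin) as (r&pre&H1&H2). exists r, (l' :: pre). split; auto.
    simpl; congruence.
Qed.
Arguments path_suffix {q j}.

Lemma shortcut : forall p j, Path p j -> exists q, Path q j /\ NoDup q.
Proof.
  induction 1 as [| p j l e Hp IH Hl Hje Hle].
  - exists []. split; constructor.
  - destruct IH as (q&Hq&Hnd).
    destruct (classic (In l q)) as [Hin|Hin].
    + destruct (path_suffix Hq l Hin) as (r&pre&H1&H2). exists (l :: r). split; auto.
      subst. apply NoDup_app_remove_l in Hnd. auto.
    + exists (l :: q). split; [econstructor; eauto | constructor; auto].
Qed.
Arguments shortcut {p j}.

Definition Concl :=
    exists s, k < s /\ IU s /\
      exists y : nat -> M, S_system U IU B IB (S k) y /\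
        (forall i, (1 <= i <= k \/ i = s) -> contains_exactly_one (S k) y (U i)) /\
        (forall i, (1 <= i <= k \/ i = t) -> contains_exactly_one (S k) y (B i)).

Lemma augment : forall j p s e, Dom j -> GoodY j p -> k < s -> IU s -> B j e -> U s e -> Concl.
Proof.
  intros j p s e HDj (y & Y1 & Y2 & Y3 & Y4 & _) Hs HIs Hje Hse.
  pose proof (Dom_IB HDj) as HIBj.
  exists s. split; auto. split; auto.
  exists (fun a => if Nat.eq_dec a (S k) then e else y a).
  split; [split; [|split] | split].
  - intros a b Ha Hb Heq.
    destruct (Nat.eq_dec a (S k)), (Nat.eq_dec b (S k)); try lia.
    + assert (U b e) by (rewrite Heq; apply Y1; lia).
      assert (IU b) by (apply IUa; lia).
      assert (s = b) by (apply Udisj with e; auto). lia.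
    + assert (U a e) by (rewrite <- Heq; apply Y1; lia).
      assert (IU a) by (apply IUa; lia).
      assert (s = a) by (apply Udisj with e; auto). lia.
    + assert (U b (y a)) by (rewrite Heq; apply Y1; lia).
      apply Udisj with (y a); [apply IUa; lia | apply IUa; lia | apply Y1; lia | auto].
  - intros i Hi a b Ha Hb H1 H2.
    destruct (Nat.eq_dec a (S k)), (Nat.eq_dec b (S k)); try lia.
    + assert (i = s) by (apply Udisj with e; auto).
      assert (i = b) by (apply Udisj with (y b); auto using IUa; [apply IUa; lia | apply Y1; lia]). lia.
    + assert (i = s) by (apply Udisj with e; auto).
      assert (i = a) by (apply Udisj with (y a); auto using IUa; [apply IUa; lia | apply Y1; lia]). lia.
    + assert (i = a) by (apply Udisj with (y a); auto; [apply IUa; lia | apply Y1; lia]).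
      assert (i = b) by (apply Udisj with (y b); auto; [apply IUa; lia | apply Y1; lia]). lia.
  - intros i Hi a b Ha Hb H1 H2.
    destruct (Nat.eq_dec a (S k)), (Nat.eq_dec b (S k)); try lia.
    + assert (i = j) by (apply Bdisj with e; auto). subst. exfalso; apply (Y3 b); auto; lia.
    + assert (i = j) by (apply Bdisj with e; auto). subst. exfalso; apply (Y3 a); auto; lia.
    + apply Y2 with i; auto; lia.
  - intros i [Hi|Hi].
    + exists i. split; [lia|]. destruct (Nat.eq_dec i (S k)); [lia|]. split; [apply Y1; auto|].
      intros b Hb H. destruct (Nat.eq_dec b (S k)).
      * assert (i = s) by (apply Udisj with e; auto using IUa). lia.
      * apply Udisj with (y b); auto using IUa; [apply IUa; lia | apply Y1; lia].
    + subst. exists (S k). split; [lia|]. destruct (Nat.eq_dec (S k) (S k)); [|lia]. split; auto.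
      intros b Hb H. destruct (Nat.eq_dec b (S k)); auto.
      assert (s = b) by (apply Udisj with (y b); auto; [apply IUa; lia | apply Y1; lia]). lia.
  - intros i Hi. assert (HDi : Dom i) by exact Hi. pose proof (Dom_IB HDi) as HIBi.
    destruct (Nat.eq_dec i j).
    + subst. exists (S k). split; [lia|]. destruct (Nat.eq_dec (S k) (S k)); [|lia]. split; auto.
      intros b Hb H. destruct (Nat.eq_dec b (S k)); auto. exfalso; apply (Y3 b); auto; lia.
    + destruct (Y4 i HDi n) as (a&Ha&Hba). exists a. split; [lia|].
      destruct (Nat.eq_dec a (S k)); [lia|]. split; auto.
      intros b Hb H. destruct (Nat.eq_dec b (S k)).
      * exfalso. apply n. apply Bdisj with e; auto.
      * apply Y2 with i; auto; lia.
Qed.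

Lemma list_of : forall (P : nat -> Prop) n, exists L, NoDup L /\
  forall i, In i L <-> (1 <= i <= n /\ P i).
Proof.
  intros P n. induction n as [|n IH].
  - exists []. split; [constructor|]. simpl; intros i; split; [contradiction | lia].
  - destruct IH as (L&HL&HLi). destruct (classic (P (S n))) as [HP|HP].
    + exists (S n :: L). split.
      * constructor; auto. intro H; apply HLi in H; lia.
      * intros i; simpl; split.
        -- intros [H|H]; [subst; split; auto; lia | apply HLi in H; split; [lia|tauto]].
        -- intros [H1 H2]. destruct (Nat.eq_dec i (S n)); [auto|right; apply HLi; split; auto; lia].
    + exists L. split; auto. intros i; split.
      * intros H; apply HLi in H; split; [lia|tauto].
      * intros [H1 H2]. apply HLi. split; auto. destruct (Nat.eq_dec i (S n)); [subst; contradiction|lia].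
Qed.

Lemma main_aug : Concl.
Proof.
  destruct (classic (exists p j e s, Path p j /\ k < s /\ IU s /\ B j e /\ U s e)) as [H|H].
  - destruct H as (p&j&e&s&Hp&Hs&HIs&Hje&Hse).
    destruct (shortcut Hp) as (q&Hq&Hnd).
    eapply augment with (p := q); eauto using path_dom, path_good.
  - exfalso. destruct (list_of (fun l => exists p, Path p l) k) as (L&HL&HLi).
    destruct hC as [HC _]. apply (HC (length L)).
    exists L, (t :: L).
    split; [auto|split; [auto|split; [|split; [|split; [simpl; auto|split]]]]].
    + intros i Hi. apply IUa. apply HLi in Hi. tauto.
    + constructor; auto. intro Hin. apply HLi in Hin. lia.
    + intros j [Hj|Hj]; [subst; auto|]. apply IBa. apply HLi in Hj. tauto.
    + intros j Hj z Hz.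
      assert (Hpj : exists p, Path p j).
      { destruct Hj as [Hj|Hj]; [subst; exists []; constructor | apply HLi in Hj; tauto]. }
      destruct Hpj as (p & Hp).
      destruct hU as (Hpos&_&_&_&Hcov).
      destruct (Hcov z) as (i&HIi&HUi).
      pose proof (Hpos i HIi).
      destruct (le_lt_dec i k).
      * exists i. split; auto. apply HLi. split; [lia|]. exists (i :: p). econstructor; eauto; lia.
      * exfalso. apply H. exists p, j, z, i. auto.
Qed.

End Main.

Theorem mainTheorem1 (M : Type) (U : nat -> M -> Prop) (IU : nat -> Prop)
    (B : nat -> M -> Prop) (IB : nat -> Prop)
    (hU : is_enum_partition U IU) (hB : is_enum_partition B IB)
    (hC : Condition1 U IU B IB)
    (k : nat) (x : nat -> M)
    (hidx : forall i, 1 <= i <= k -> IU i /\ IB i)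
    (hx : S_system U IU B IB k x)
    (hdiag : forall i, 1 <= i <= k -> forall z, (U i z /\ B i z) <-> z = x i) :
  forall t, k < t -> IB t ->
    exists s, k < s /\ IU s /\
      exists y : nat -> M, S_system U IU B IB (S k) y /\
        (forall i, (1 <= i <= k \/ i = s) -> contains_exactly_one (S k) y (U i)) /\
        (forall i, (1 <= i <= k \/ i = t) -> contains_exactly_one (S k) y (B i)).
Proof.
  intros t ht hIBt.
  exact (main_aug M U IU B IB hU hB hC k x hidx hx hdiag t ht hIBt).
Qed.
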